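(* Under 2-Approval, $2$-by-$2$ GS-games of type (i) and of type (vi) are both realizable: for each of these two types there exist a finite candidate set $C$, a tie-breaking order on $C$, a profile $V$ and a $2$-by-$2$ GS-game for $V$ under 2-Approval of that type.
   Context: Each voter $i$ has a strict linear order $v_i$ over $C$. 2-Approval: each candidate gets one point from each voter ranking her among his top two; the highest score wins, ties broken in favour of the candidate highest in a fixed strict linear order $>$ on $C$. Write $\mathcal{R}$ for the rule and $(V_{-i},v_i')$ for $V$ with $v_i$ replaced by $v_i'$. A GS-manipulation of voter $i$ at $V$ is a vote $v_i'$ such that $i$ strictly prefers $\mathcal{R}(V_{-i},v_i')$ to $\mathcal{R}(V)$ and for every vote $v_i''$ either $\mathcal{R}(V_{-i},v_i'')=\mathcal{R}(V_{-i},v_i')$ or $i$ strictly prefers $\mathcal{R}(V_{-i},v_i')$ to $\mathcal{R}(V_{-i},v_i'')$; $i$ is a GS-manipulator if he has one. A GS-game for $V$ has as players all GS-manipulators at $V$, each player $i$ having action set consisting of $v_i$ and a subset of his GS-manipulations; other voters vote sincerely. A $2$-by-$2$ GS-game is one with exactly two players $1,2$, with action sets $\{s_1,i_1\}$, $\{s_2,i_2\}$, $s_p=v_p$ sincere and $i_p$ a GS-manipulation. Let $W(a,b)$ be the winner when player 1 plays $a$ and player 2 plays $b$. Set $\rho_1=+$ if player 1 strictly prefers $W(i_1,i_2)$ to $W(s_1,i_2)$, $0$ if they are equal, $-$ if he strictly prefers $W(s_1,i_2)$; define $\rho_2$ analogously for player 2 comparing $W(i_1,i_2)$ with $W(i_1,s_2)$.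 Type (i) means $\{\rho_1,\rho_2\}=\{+,+\}$; type (vi) means $\{\rho_1,\rho_2\}=\{+,-\}$. *)

(* Defs.v *)
From mathcomp Require Import all_boot.
Set Implicit Arguments. Unset Strict Implicit. Unset Printing Implicit Defensive.

Section Voting.
Variables (C I : finType).

(* A strict linear order on C, given as a boolean relation: [v a b] means
   "a is strictly preferred to (ranked above) b". *)
Definition strict_linear_order (v : rel C) : Prop :=
  [/\ irreflexive v, transitive v & forall a b, a != b -> v a b || v b a].

Definition profile := I -> rel C.

Definition profile_ok (V : profile) : Prop := forall i, strict_linear_order (V i).

Definition upd (V : profile) (i : I) (v' : rel C) : profile :=
  fun j => if j == i then v' else V j.

Definition top2 (v : rel C) (c : C) : bool := #|[set d | v d c]| < 2.

Definition score (V : profile) (c : C) : nat := #|[set j | top2 (V j) c]|.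

(* 2-Approval winner with ties broken by the strict linear order [tie]
   (tie a b : a is above b in the tie-breaking order). Returns None only
   when C is empty. *)
Definition winner (tie : rel C) (V : profile) : option C :=
  [pick c | [forall d, (d != c) ==>
      ((score V d < score V c) || ((score V d == score V c) && tie c d))]].

Definition prefers (v : rel C) (a b : option C) : bool :=
  match a, b with Some x, Some y => v x y | _, _ => false end.

Definition GS_manipulation (tie : rel C) (V : profile) (i : I) (v' : rel C) : Prop :=
  [/\ strict_linear_order v',
      prefers (V i) (winner tie (upd V i v')) (winner tie V) &
      forall v'', strict_linear_order v'' ->
        winner tie (upd V i v'') = winner tie (upd V i v') \/
        prefers (V i) (winner tie (upd V i v')) (winner tie (upd V i v''))].

Definition GS_manipulator (tie : rel C) (V : profile) (i : I) : Prop :=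
  exists v', GS_manipulation tie V i v'.

Definition W2 (tie : rel C) (V : profile) (p1 p2 : I) (a b : rel C) : option C :=
  winner tie (upd (upd V p1 a) p2 b).

(* A 2-by-2 GS-game for V: the GS-manipulators at V are exactly the two
   distinct players p1, p2, with action sets {V p1, i1} and {V p2, i2},
   i1, i2 being GS-manipulations. *)
Definition GS_game_2by2 (tie : rel C) (V : profile) (p1 p2 : I) (i1 i2 : rel C) : Prop :=
  [/\ p1 != p2,
      (forall i, GS_manipulator tie V i <-> (i = p1 \/ i = p2)),
      GS_manipulation tie V p1 i1 &
      GS_manipulation tie V p2 i2].

Inductive sgn := Plus | Zero | Minus.

Definition cmp_sgn (v : rel C) (a b : option C) : sgn :=
  if prefers v a b then Plus else if a == b then Zero else Minus.

Definition rho1 (tie : rel C) (V : profile) (p1 p2 : I) (i1 i2 : rel C) : sgn :=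
  cmp_sgn (V p1) (W2 tie V p1 p2 i1 i2) (W2 tie V p1 p2 (V p1) i2).

Definition rho2 (tie : rel C) (V : profile) (p1 p2 : I) (i1 i2 : rel C) : sgn :=
  cmp_sgn (V p2) (W2 tie V p1 p2 i1 i2) (W2 tie V p1 p2 i1 (V p2)).

Definition type_i tie V p1 p2 i1 i2 : Prop :=
  rho1 tie V p1 p2 i1 i2 = Plus /\ rho2 tie V p1 p2 i1 i2 = Plus.

Definition type_vi tie V p1 p2 i1 i2 : Prop :=
  (rho1 tie V p1 p2 i1 i2 = Plus /\ rho2 tie V p1 p2 i1 i2 = Minus) \/
  (rho1 tie V p1 p2 i1 i2 = Minus /\ rho2 tie V p1 p2 i1 i2 = Plus).

End Voting.

(* Main.v *)
Require Import Defs.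
From mathcomp Require Import all_boot.
Set Implicit Arguments. Unset Strict Implicit. Unset Printing Implicit Defensive.

Lemma card_lt2 n : 1 < n -> #|[pred k : 'I_n | k < 2]| = 2.
Proof.
move=> hn; rewrite cardE /enum_mem -enumT size_filter /=.
rewrite -(count_map val (fun k => k < 2)) val_enum_ord.
case: n hn => [|[|m]] // _.
rewrite /= (eq_in_count (a2 := pred0)) ?count_pred0 //.
move=> x; rewrite mem_iota => /andP [h _]. by rewrite ltnNge h.
Qed.

Section Gen.
Variable C : finType.

Lemma top2_card (v : rel C) : strict_linear_order v -> 1 < #|C| ->
  #|[set c | top2 v c]| = 2.
Proof.
case=> irr tr tot hC.
pose rk c := #|[set d | v d c]|.
have rlt c : rk c < #|C|.
  rewrite /rk -cardsT; apply: proper_card; apply/properP; split; first exact: subsetT.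
  by exists c; rewrite ?inE ?irr.
have rmono a b : v a b -> rk a < rk b.
  move=> hab; apply: proper_card; apply/properP; split.
    by apply/subsetP => d; rewrite !inE => hda; exact: tr hab.
  by exists a; rewrite !inE ?irr ?hab.
pose f c := Ordinal (rlt c).
have finj : injective f.
  move=> a b /(congr1 val) /= eq; apply/eqP; apply/negPn/negP => neq.
  by case/orP: (tot a b neq) => /rmono; rewrite eq ltnn.
have -> : #|[set c | top2 v c]| = #|[preim f of [pred k : 'I_#|C| | k < 2]]|.
  by apply: eq_card => c; rewrite !inE.
rewrite (card_preim finj); apply: etrans _ (card_lt2 hC).
apply: eq_card => k; rewrite !inE.
by rewrite (inj_card_onto finj) ?card_ord.
Qed.

Lemma top2_pair (v : rel C) : strict_linear_order v -> 1 < #|C| ->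
  exists a b, a != b /\ forall c, top2 v c = (c == a) || (c == b).
Proof.
move=> hv hC; have /cards2P [a [b [hab E]]] : #|[set c | top2 v c]| == 2 by rewrite (top2_card hv hC).
by exists a, b; split=> // c; rewrite -in_set2 -E inE.
Qed.

Lemma cardL (T : finType) (L : seq T) (P : pred T) : enum T = L ->
  #|[set x | P x]| = count P L.
Proof.
move=> EL; rewrite cardE /enum_mem -enumT EL size_filter.
by apply: eq_count => x; rewrite /= inE.
Qed.

Lemma forallL (T : finType) (L : seq T) (P : pred T) : enum T = L ->
  [forall x, P x] = all P L.
Proof.
move=> EL; apply/forallP/allP => [h x _ | h x] //; apply: h.
by rewrite -EL mem_enum.
Qed.

Lemma pickL (T : finType) (L : seq T) (P : pred T) : enum T = L ->
  [pick x | P x] = ohead (filter P L).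
Proof. by move=> EL; rewrite /pick /enum_mem -enumT EL. Qed.
End Gen.

Definition o6 (k : nat) (h : k < 6) : 'I_6 := Ordinal h.
Definition O6 : seq 'I_6 := [:: @o6 0 isT; @o6 1 isT; @o6 2 isT; @o6 3 isT; @o6 4 isT; @o6 5 isT].
Definition O2 : seq 'I_2 := [:: @Ordinal 2 0 isT; @Ordinal 2 1 isT].

Lemma enum6 : enum 'I_6 = O6.
Proof. by apply: (inj_map val_inj); rewrite val_enum_ord. Qed.
Lemma enum2 : enum 'I_2 = O2.
Proof. by apply: (inj_map val_inj); rewrite val_enum_ord. Qed.
Lemma mem6 (a : 'I_6) : a \in O6.
Proof. by rewrite -enum6 mem_enum. Qed.
Lemma card6 : 1 < #|'I_6|.
Proof. by rewrite card_ord. Qed.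

Definition ordr (rk : seq nat) : rel 'I_6 := fun a b => index (val a) rk < index (val b) rk.

Lemma slo_ordr rk : all (fun k => k \in rk) (iota 0 6) -> strict_linear_order (ordr rk).
Proof.
move=> hall; split.
- by move=> a; exact: ltnn.
- by move=> b a c; exact: ltn_trans.
move=> a b neq; rewrite /ordr -neq_ltn; apply: contra neq => /eqP e.
have hm (x : 'I_6) : val x \in rk by move/allP: hall; apply; rewrite mem_iota /=.
by apply/eqP; apply: val_inj; exact: (index_inj 0 (hm a) (hm b) e).
Qed.

Definition topL (v : rel 'I_6) (c : 'I_6) := count (fun d => v d c) O6 < 2.
Definition scoreL (T : 'I_2 -> 'I_6 -> bool) (c : 'I_6) := count (fun j => T j c) O2.
Definition winL (tie : rel 'I_6) (T : 'I_2 -> 'I_6 -> bool) : option 'I_6 :=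
  ohead (filter (fun c => all (fun d => (d != c) ==>
     ((scoreL T d < scoreL T c) || ((scoreL T d == scoreL T c) && tie c d))) O6) O6).

Lemma topE v c : top2 v c = topL v c.
Proof. by rewrite /top2 (cardL _ enum6). Qed.

Lemma scoreE (X : 'I_2 -> rel 'I_6) c : score X c = scoreL (fun j c => topL (X j) c) c.
Proof. by rewrite /score (cardL _ enum2); apply: eq_count => j; rewrite topE. Qed.

Lemma winnerL tie (X : 'I_2 -> rel 'I_6) : winner tie X = winL tie (fun j c => topL (X j) c).
Proof.
rewrite /winner (pickL _ enum6) /winL; congr ohead; apply: eq_filter => c.
by rewrite (forallL _ enum6); apply: eq_all => d; rewrite !scoreE.
Qed.

Lemma winL_ext tie T1 T2 : (forall j c, T1 j c = T2 j c) -> winL tie T1 = winL tie T2.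
Proof.
move=> h; have hs c : scoreL T1 c = scoreL T2 c by apply: eq_count => j; rewrite h.
by rewrite /winL; congr ohead; apply: eq_filter => c; apply: eq_all => d; rewrite !hs.
Qed.

Definition wAB tie (V : 'I_2 -> rel 'I_6) p a b :=
  winL tie (fun j c => if j == p then (c == a) || (c == b) else topL (V j) c).

Lemma upd_top tie V p v a b : (forall c, top2 v c = (c == a) || (c == b)) ->
  winner tie (upd V p v) = wAB tie V p a b.
Proof.
move=> h; rewrite winnerL; apply: winL_ext => j c; rewrite /upd.
by case: (j == p) => //; rewrite -h topE.
Qed.

Lemma manip tie V p v' : strict_linear_order v' ->
  prefers (V p) (winner tie (upd V p v')) (winner tie V) ->
  all (fun a => all (fun b => (a != b) ==> ((wAB tie V p a b == winner tie (upd V p v')) ||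
       prefers (V p) (winner tie (upd V p v')) (wAB tie V p a b))) O6) O6 ->
  GS_manipulation tie V p v'.
Proof.
move=> h1 h2 h3; split => // v'' hv''.
have [a [b [hab H]]] := top2_pair hv'' card6; rewrite (upd_top tie V p H).
move/allP: h3 => /(_ a (mem6 a)) /allP /(_ b (mem6 b)); rewrite hab /=.
by case/orP => [/eqP -> | ?]; [left | right].
Qed.

Definition tie0 := ordr [:: 0; 1; 2; 3; 4; 5].
Definition P1 : 'I_2 := @Ordinal 2 0 isT.
Definition P2 : 'I_2 := @Ordinal 2 1 isT.

Lemma game_of (tie : rel 'I_6) (V : 'I_2 -> rel 'I_6) (i1 i2 : rel 'I_6) :
  (forall j, strict_linear_order (V j)) ->
  GS_manipulation tie V P1 i1 -> GS_manipulation tie V P2 i2 ->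
  GS_game_2by2 tie V P1 P2 i1 i2.
Proof.
move=> _ m1 m2; split => // i; split.
  by move=> _; case: i => [[|[|k]] hk]; [left | right | ]; rewrite // /P1 /P2; apply: val_inj.
by case=> ->; [exists i1 | exists i2].
Qed.

Definition Va : 'I_2 -> rel 'I_6 := fun j => if j == P1 then ordr [:: 2;1;5;3;4;0] else ordr [:: 3;5;0;4;2;1].
Definition ia1 := ordr [:: 2;4;1;5;3;0].
Definition ia2 := ordr [:: 0;4;3;5;2;1].

Lemma ex1 : exists (C I : finType) (tie : rel C) (V : I -> rel C) (p1 p2 : I) (i1 i2 : rel C),
      [/\ strict_linear_order tie, profile_ok V,
          GS_game_2by2 tie V p1 p2 i1 i2 & type_i tie V p1 p2 i1 i2].
Proof.
exists ('I_6 : finType), ('I_2 : finType), tie0, Va, P1, P2, ia1, ia2.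
have okV : profile_ok Va by move=> j; rewrite /Va; case: (j == P1); apply: slo_ordr.
split => //.
- exact: slo_ordr.
- apply: game_of => //; apply: manip; try exact: slo_ordr; rewrite ?winnerL; vm_compute; reflexivity.
- by split; rewrite /rho1 /rho2 /cmp_sgn /W2 !winnerL; vm_compute.
Qed.

Definition Vb : 'I_2 -> rel 'I_6 := fun j => if j == P1 then ordr [:: 2;1;0;5;4;3] else ordr [:: 3;5;4;0;2;1].
Definition ib1 := ordr [:: 2;4;1;0;5;3].
Definition ib2 := ordr [:: 0;4;3;5;2;1].

Lemma ex2 : exists (C I : finType) (tie : rel C) (V : I -> rel C) (p1 p2 : I) (i1 i2 : rel C),
      [/\ strict_linear_order tie, profile_ok V,
          GS_game_2by2 tie V p1 p2 i1 i2 & type_vi tie V p1 p2 i1 i2].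
Proof.
exists ('I_6 : finType), ('I_2 : finType), tie0, Vb, P1, P2, ib1, ib2.
have okV : profile_ok Vb by move=> j; rewrite /Vb; case: (j == P1); apply: slo_ordr.
split => //.
- exact: slo_ordr.
- apply: game_of => //; apply: manip; try exact: slo_ordr; rewrite ?winnerL; vm_compute; reflexivity.
- by right; split; rewrite /rho1 /rho2 /cmp_sgn /W2 !winnerL; vm_compute.
Qed.

Theorem mainTheorem6 :
  (exists (C I : finType) (tie : rel C) (V : I -> rel C) (p1 p2 : I) (i1 i2 : rel C),
      [/\ strict_linear_order tie, profile_ok V,
          GS_game_2by2 tie V p1 p2 i1 i2 & type_i tie V p1 p2 i1 i2]) /\
  (exists (C I : finType) (tie : rel C) (V : I -> rel C) (p1 p2 : I) (i1 i2 : rel C),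
      [/\ strict_linear_order tie, profile_ok V,
          GS_game_2by2 tie V p1 p2 i1 i2 & type_vi tie V p1 p2 i1 i2]).
Proof. exact: (conj ex1 ex2). Qed.
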